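(* Let $\mathcal{C}$ be a category with finite coproducts and let $\mathbf{Mon}(\mathcal{C})$ be the category of monads on $\mathcal{C}$ and monad morphisms. The assignment sending a monad $M$ to its semifree monad $M^{\mathrm{s}}$ and a monad morphism $\sigma:M\Rightarrow T$ to $\sigma^{\mathrm{s}}$ with components $\sigma^{\mathrm{s}}_X=\mathrm{id}_X+\sigma_X: X+MX\to X+TX$ is a functor $(-)^{\mathrm{s}}:\mathbf{Mon}(\mathcal{C})\to\mathbf{Mon}(\mathcal{C})$ (in particular, $\sigma^{\mathrm{s}}$ is a monad morphism $M^{\mathrm{s}}\Rightarrow T^{\mathrm{s}}$).
   Context: For a monad $(M,\eta,\mu)$ on a category with finite coproducts, the semifree monad is $M^{\mathrm{s}}=\mathrm{Id}+M$ with unit $\eta^{\mathrm{s}}=\mathrm{inl}$ and multiplication $\mu^{\mathrm{s}}=[\mathrm{id}_{\mathrm{Id}+M},\ \mathrm{inr}\circ\mu\circ M[\eta,\mathrm{id}_M]]$, where $[f,g]$ denotes copairing. A monad morphism $\sigma:M\Rightarrow T$ is a natural transformation with $\sigma\circ\eta^M=\eta^T$ and $\sigma\circ\mu^M=\mu^T\circ\sigma_T\circ M\sigma$. *)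

(* Defs.v *)
Set Implicit Arguments.
Unset Strict Implicit.

(* A (locally small) category; equality of morphisms is Leibniz equality. *)
Record Category := {
  Obj :> Type;
  Hom : Obj -> Obj -> Type;
  idm : forall X, Hom X X;
  comp : forall X Y Z, Hom Y Z -> Hom X Y -> Hom X Z;
  comp_id_l : forall X Y (f : Hom X Y), comp (idm Y) f = f;
  comp_id_r : forall X Y (f : Hom X Y), comp f (idm X) = f;
  comp_assoc : forall X Y Z W (h : Hom Z W) (g : Hom Y Z) (f : Hom X Y),
      comp h (comp g f) = comp (comp h g) f
}.

Arguments Hom {c} _ _.
Arguments idm {c} _.
Arguments comp {c X Y Z} _ _.
Notation "g \o f" := (comp g f) (at level 40, left associativity).

Record FinCoproducts (C : Category) := {
  initial : Obj C;
  init_arr : forall X : Obj C, Hom initial X;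
  init_unique : forall X (h : Hom initial X), h = init_arr X;
  cp : Obj C -> Obj C -> Obj C;
  inl : forall X Y, Hom X (cp X Y);
  inr : forall X Y, Hom Y (cp X Y);
  copair : forall X Y Z, Hom X Z -> Hom Y Z -> Hom (cp X Y) Z;
  copair_inl : forall X Y Z (f : Hom X Z) (g : Hom Y Z), copair f g \o inl X Y = f;
  copair_inr : forall X Y Z (f : Hom X Z) (g : Hom Y Z), copair f g \o inr X Y = g;
  copair_unique : forall X Y Z (f : Hom X Z) (g : Hom Y Z) (h : Hom (cp X Y) Z),
      h \o inl X Y = f -> h \o inr X Y = g -> h = copair f g
}.

Arguments cp {C} _ _ _.
Arguments inl {C} _ _ _.
Arguments inr {C} _ _ _.
Arguments copair {C} _ {X Y Z} _ _.

Definition cpmap {C : Category} (CP : FinCoproducts C) {X Y X' Y' : Obj C}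
  (f : Hom X X') (g : Hom Y Y') : Hom (cp CP X Y) (cp CP X' Y') :=
  copair CP (inl CP X' Y' \o f) (inr CP X' Y' \o g).

Record MonadData (C : Category) := {
  mobj : Obj C -> Obj C;
  mmap : forall X Y, Hom X Y -> Hom (mobj X) (mobj Y);
  meta : forall X, Hom X (mobj X);
  mmu : forall X, Hom (mobj (mobj X)) (mobj X)
}.

Arguments mobj {C} _ _.
Arguments mmap {C} _ {X Y} _.
Arguments meta {C} _ _.
Arguments mmu {C} _ _.

Definition is_monad {C : Category} (M : MonadData C) : Prop :=
  (forall X, mmap M (idm X) = idm (mobj M X)) /\
  (forall X Y Z (g : Hom Y Z) (f : Hom X Y), mmap M (g \o f) = mmap M g \o mmap M f) /\
  (forall X Y (f : Hom X Y), mmap M f \o meta M X = meta M Y \o f) /\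
  (forall X Y (f : Hom X Y), mmap M f \o mmu M X = mmu M Y \o mmap M (mmap M f)) /\
  (forall X, mmu M X \o mmap M (mmu M X) = mmu M X \o mmu M (mobj M X)) /\
  (forall X, mmu M X \o meta M (mobj M X) = idm (mobj M X)) /\
  (forall X, mmu M X \o mmap M (meta M X) = idm (mobj M X)).

Definition is_monad_morphism {C : Category} (M T : MonadData C)
  (sigma : forall X, Hom (mobj M X) (mobj T X)) : Prop :=
  (forall X Y (f : Hom X Y), mmap T f \o sigma X = sigma Y \o mmap M f) /\
  (forall X, sigma X \o meta M X = meta T X) /\
  (forall X, sigma X \o mmu M X
             = mmu T X \o sigma (mobj T X) \o mmap M (sigma X)).

Definition semifree {C : Category} (CP : FinCoproducts C) (M : MonadData C)
  : MonadData C :=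
  {| mobj := fun X => cp CP X (mobj M X);
     mmap := fun X Y f => cpmap CP f (mmap M f);
     meta := fun X => inl CP X (mobj M X);
     mmu := fun X =>
       copair CP (idm (cp CP X (mobj M X)))
         (inr CP X (mobj M X) \o mmu M X
            \o mmap M (copair CP (meta M X) (idm (mobj M X)))) |}.

Definition semifree_mor {C : Category} (CP : FinCoproducts C) {M T : MonadData C}
  (sigma : forall X, Hom (mobj M X) (mobj T X))
  : forall X, Hom (mobj (semifree CP M) X) (mobj (semifree CP T) X) :=
  fun X => cpmap CP (idm X) (sigma X).
Arguments is_monad_morphism {C} M T sigma.
Arguments semifree_mor {C} CP {M T} sigma X.

(* Main.v *)
Require Import Defs.
Set Implicit Arguments.

Ltac ra := repeat rewrite <- comp_assoc.

Lemma cp_ext (C : Category) (CP : FinCoproducts C) X Y Z (h k : Hom (cp CP X Y) Z) :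
  h \o inl CP X Y = k \o inl CP X Y -> h \o inr CP X Y = k \o inr CP X Y -> h = k.
Proof.
  intros H1 H2. transitivity (copair CP (k \o inl CP X Y) (k \o inr CP X Y)).
  - apply copair_unique; auto.
  - symmetry. apply copair_unique; auto.
Qed.

Lemma cinl (C : Category) (CP : FinCoproducts C) X Y Z W (f : Hom X Z) (g : Hom Y Z) (h : Hom W X) :
  copair CP f g \o (inl CP X Y \o h) = f \o h.
Proof. rewrite comp_assoc, copair_inl. reflexivity. Qed.
Lemma cinr (C : Category) (CP : FinCoproducts C) X Y Z W (f : Hom X Z) (g : Hom Y Z) (h : Hom W Y) :
  copair CP f g \o (inr CP X Y \o h) = g \o h.
Proof. rewrite comp_assoc, copair_inr. reflexivity. Qed.

Ltac simp := ra; repeat (rewrite ?cinl, ?cinr, ?copair_inl, ?copair_inr, ?comp_id_l, ?comp_id_r); ra.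

Lemma cpmap_comp (C : Category) (CP : FinCoproducts C) X Y X' Y' X'' Y''
  (f : Hom X X') (g : Hom Y Y') (f' : Hom X' X'') (g' : Hom Y' Y'') :
  cpmap CP f' g' \o cpmap CP f g = cpmap CP (f' \o f) (g' \o g).
Proof.
  unfold cpmap. apply cp_ext; simp; reflexivity.
Qed.

Lemma cpmap_id (C : Category) (CP : FinCoproducts C) X Y :
  cpmap CP (idm X) (idm Y) = idm (cp CP X Y).
Proof. unfold cpmap. apply cp_ext; simp; reflexivity. Qed.

Lemma Mcomp (C : Category) (M : MonadData C) (HM : is_monad M) X Y Z W
  (g : Hom Y Z) (f : Hom X Y) (h : Hom W (mobj M X)) :
  mmap M g \o (mmap M f \o h) = mmap M (g \o f) \o h.
Proof. destruct HM as (_&H&_). rewrite H, comp_assoc. reflexivity. Qed.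

Lemma Mcomp0 (C : Category) (M : MonadData C) (HM : is_monad M) X Y Z
  (g : Hom Y Z) (f : Hom X Y) :
  mmap M g \o mmap M f = mmap M (g \o f).
Proof. destruct HM as (_&H&_). rewrite H. reflexivity. Qed.

Theorem lemma4 (C : Category) (CP : FinCoproducts C) :
  (* object part: M^s is a monad *)
  (forall M : MonadData C, is_monad M -> is_monad (semifree CP M)) /\
  (* morphism part: sigma^s is a monad morphism M^s => T^s *)
  (forall (M T : MonadData C) (sigma : forall X, Hom (mobj M X) (mobj T X)),
     is_monad M -> is_monad T -> is_monad_morphism M T sigma ->
     is_monad_morphism (semifree CP M) (semifree CP T) (semifree_mor CP sigma)) /\
  (* preservation of identities *)
  (forall M : MonadData C, is_monad M ->
     forall X, semifree_mor CP (fun Y => idm (mobj M Y)) X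
               = idm (mobj (semifree CP M) X)) /\
  (* preservation of composition *)
  (forall (M T S : MonadData C)
          (sigma : forall X, Hom (mobj M X) (mobj T X))
          (tau : forall X, Hom (mobj T X) (mobj S X)),
     is_monad M -> is_monad T -> is_monad S ->
     is_monad_morphism M T sigma -> is_monad_morphism T S tau ->
     forall X, semifree_mor CP (fun Y => tau Y \o sigma Y) X
               = semifree_mor CP tau X \o semifree_mor CP sigma X).
Proof.
  split; [|split; [|split]].
  - intros M HM. pose proof HM as (M1&M2&M3&M4&M5&M6&M7).
    unfold is_monad; simpl.
    split; [|split; [|split; [|split; [|split; [|split]]]]].
    + intros X. rewrite M1. apply cpmap_id.
    + intros. rewrite M2. symmetry. apply cpmap_comp.
    + intros. unfold cpmap. apply copair_inl.
    + intros X Y f. apply cp_ext.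
      * unfold cpmap. simp. reflexivity.
      * unfold cpmap. simp. f_equal.
        rewrite comp_assoc, M4, <- comp_assoc. f_equal.
        rewrite !(Mcomp0 HM). f_equal. apply cp_ext; simp; auto.
    + intros X. apply cp_ext.
      * unfold cpmap. simp. reflexivity.
      * unfold cpmap. simp. f_equal.
        rewrite (comp_assoc (mmap M _) (mmu M _)), M4. ra.
        rewrite (comp_assoc (mmu M X) (mmu M (mobj M X))), <- M5. ra.
        f_equal. rewrite !(Mcomp0 HM). f_equal.
        apply cp_ext; simp.
        -- rewrite M3, comp_assoc, M6, comp_id_l. reflexivity.
        -- reflexivity.
    + intros. apply copair_inl.
    + intros X. apply cp_ext.
      * unfold cpmap. simp. reflexivity.
      * unfold cpmap. simp. rewrite (Mcomp0 HM), copair_inl, M7, comp_id_r. reflexivity.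
  - intros M T sigma HM HT [S1 [S2 S3]].
    pose proof HM as (M1&M2&M3&M4&M5&M6&M7).
    pose proof HT as (T1&T2&T3&T4&T5&T6&T7).
    unfold is_monad_morphism, semifree_mor; simpl.
    split; [|split].
    + intros X Y f. apply cp_ext; unfold cpmap; simp; try reflexivity. f_equal. apply S1.
    + intros X. unfold cpmap. simp. reflexivity.
    + intros X. apply cp_ext; unfold cpmap; simp.
      * reflexivity.
      * etransitivity; [|symmetry; apply cinr]. ra. f_equal.
        rewrite comp_assoc, S3. ra.
        rewrite (comp_assoc (mmap T _) (sigma _)), S1. ra.
        f_equal. f_equal. rewrite !(Mcomp0 HM). f_equal.
        apply cp_ext; simp.
        -- apply S2.
        -- reflexivity.
  - intros. unfold semifree_mor. apply cpmap_id.
  - intros. unfold semifree_mor. symmetry. etransitivity; [apply cpmap_comp|]. rewrite comp_id_l. reflexivity.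
Qed.
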